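(* Let $S$ be a quasi-tree of a map $\mathcal M$ and let $e,f$ be distinct edges of $\mathcal M$ that are adjacent in $\widetilde{\Lambda}(\mathcal M,S)$. Then $S'=S\triangle\{e,f\}$ is a quasi-tree of $\mathcal M$, and the vertex-colored circle graph $\widetilde{\Lambda}(\mathcal M,S')$ is obtained from $\widetilde{\Lambda}(\mathcal M,S)\wedge ef$ by exchanging the colors of $e$ and $f$. Conversely, if $S\triangle\{e,f\}$ is a quasi-tree of $\mathcal M$ (for distinct edges $e,f$), then $e$ and $f$ are adjacent in $\widetilde{\Lambda}(\mathcal M,S)$.
   Context: A map is a triple $\mathcal M=(B,\sigma,\alpha)$ with $B$ finite, $\sigma,\alpha\in\mathrm{Sym}(B)$, $\alpha$ a fixed-point-free involution, $\langle\sigma,\alpha\rangle$ transitive on $B$. Edges are the cycles of $\alpha$; $\underline b=\{b,\alpha(b)\}$. The tour of a set $F$ of edges is the permutation $\tau$ with $\tau(b)=\sigma(\alpha(b))$ if $\underline b\in F$, $\tau(b)=\sigma(b)$ otherwise; a quasi-tree is a set of edges whose tour is a single cycle on $B$. For a quasi-tree $S$ with tour $\tau$, $\widetilde\Lambda(\mathcal M,S)$ is the chord diagram obtained by placing the flags on a circle in the cyclic order of $\tau$ and joining by a chord the two flags of each edge, the chord of an edge colored $1$ if the edge is in $S$ and $2$ otherwise; it is identified with its circle graph, whose vertices are the edges of $\mathcal M$ (with these colors), two being adjacent iff their chords cross (i.e. their flags alternate around the circle). For a graph $G$ and vertex $v$, the local complementation $G\ast v$ replaces the subgraph induced on the neighbors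 of $v$ by its complement; for an edge $uv$, the pivot is $G\wedge uv=G\ast u\ast v\ast u$. *)

(* Defs.v *)
From mathcomp Require Import all_boot all_order all_fingroup.
Set Implicit Arguments. Unset Strict Implicit. Unset Printing Implicit Defensive.

Definition is_map (B : finType) (sigma alpha : {perm B}) : Prop :=
  (forall b : B, alpha (alpha b) = b) /\
  (forall b : B, alpha b != b) /\
  (forall x y : B, exists2 g, g \in <<[set sigma; alpha]>>%g & g x = y).

Definition edge_of (B : finType) (alpha : {perm B}) (b : B) : {set B} :=
  [set b; alpha b].

Definition edges (B : finType) (alpha : {perm B}) : {set {set B}} :=
  [set edge_of alpha b | b : B].

Definition tour (B : finType) (sigma alpha : {perm B}) (F : {set {set B}})
  (b : B) : B :=
  if edge_of alpha b \in F then sigma (alpha b) else sigma b.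

Definition quasi_tree (B : finType) (sigma alpha : {perm B})
  (F : {set {set B}}) : Prop :=
  F \subset edges alpha /\
  (forall x y : B, fconnect (tour sigma alpha F) x y).

(* the circle graph of tilde-Lambda(M,S): two distinct edges x, y are adjacent
   iff their chords cross, i.e. the flags alternate around the circle given by
   the cyclic order of the tour of S. Going around from the flag a of x, exactly
   one of the two flags of y is met before the other flag alpha a of x. *)
Definition circ (B : finType) (sigma alpha : {perm B}) (S : {set {set B}})
  : rel {set B} :=
  fun x y =>
    (x != y) &&
    [exists a : B, [exists b : B,
      [&& x == edge_of alpha a, y == edge_of alpha b &
        (findex (tour sigma alpha S) a b < findex (tour sigma alpha S) a (alpha a))
        != (findex (tour sigma alpha S) a (alpha b)
              < findex (tour sigma alpha S) a (alpha a))]]].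

Definition color (B : finType) (S : {set {set B}}) (x : {set B}) : nat :=
  if x \in S then 1 else 2.

Definition lcomp (T : eqType) (G : rel T) (v : T) : rel T :=
  fun x y => if [&& x != y, G v x & G v y] then ~~ G x y else G x y.

Definition pivot (T : eqType) (G : rel T) (u v : T) : rel T :=
  lcomp (lcomp (lcomp G u) v) u.

Definition swap_color (c : nat) : nat := if c == 1 then 2 else 1.

Definition symdiff (T : finType) (A C : {set T}) : {set T} :=
  (A :\: C) :|: (C :\: A).

(* Main.v *)
Require Import Defs.
From mathcomp Require Import all_boot all_order all_fingroup.
From mathcomp Require Import zify.
Set Implicit Arguments. Unset Strict Implicit. Unset Printing Implicit Defensive.

Definition ltS {T : eqType} (s : seq T) p q := index p s < index q s.
Definition xcr {T : eqType} (s : seq T) u u' v v' :=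
  ltS s u v (+) ltS s u v' (+) ltS s u' v (+) ltS s u' v'.
Definition ltL (i j : nat) (b : bool) := if i == j then b else i < j.
Definition ltP (ks : seq nat) (i j : nat) (b : bool) :=
  if i == j then b else index i ks < index j ks.
Definition X4 (F : nat -> nat -> bool -> bool) i i' j j' b1 b2 b3 b4 :=
  F i j b1 (+) F i j' b2 (+) F i' j b3 (+) F i' j' b4.
Definition cls {T : eqType} (L : seq (seq T)) p := find (fun s => p \in s) L.
Definition inner {T : eqType} (L : seq (seq T)) p q :=
  index p (nth [::] L (cls L p)) < index q (nth [::] L (cls L p)).

Lemma ltS_flatten (T : eqType) (L : seq (seq T)) p q :
  ltS (flatten L) p q = ltL (cls L p) (cls L q) (inner L p q).
Proof.
elim: L => [|s L IH] //=.
rewrite /ltS /= !index_cat /inner /cls /=.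
have hp := index_mem p s; have hq := index_mem q s.
case: (p \in s) hp => hp; case: (q \in s) hq => hq //=.
- by rewrite /ltL /= (leq_trans hp (leq_addr (index q (flatten L)) (size s))) ltn0Sn.
- by rewrite /ltL /= ltnNge (leq_trans (ltnW hq) (leq_addr (index p (flatten L)) (size s))) ltn0.
- by rewrite /ltL /= ltn_add2l eqSS ltnS; exact: IH.
Qed.

Lemma mem_nth_flatten (T : eqType) (L : seq (seq T)) k p :
  p \in nth [::] L k -> p \in flatten L.
Proof.
elim: L k => [|s L IH] [|k] //=; rewrite mem_cat => H; apply/orP; [left|right] => //.
exact: IH H.
Qed.

Lemma find_flatten_uniq (T : eqType) (L : seq (seq T)) p k :
  uniq (flatten L) -> p \in nth [::] L k -> cls L p = k.
Proof.
elim: L k => [|s L IH] [|k] //=; rewrite cat_uniq => /and3P [_ hd uL] H;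
  rewrite /cls /=.
- by rewrite H.
- have hf := mem_nth_flatten H.
  have -> : (p \in s) = false.
    by apply/negP => ps; move/hasP: hd; apply; exists p.
  by congr S; apply: IH.
Qed.

Lemma mem_cls (T : eqType) (L : seq (seq T)) p :
  p \in flatten L -> p \in nth [::] L (cls L p).
Proof.
move/flattenP => [s sL ps]; rewrite /cls.
apply: (@nth_find _ [::] (fun s => p \in s)).
by apply/hasP; exists s.
Qed.

Lemma cls_lt (T : eqType) (L : seq (seq T)) p :
  p \in flatten L -> cls L p < size L.
Proof.
move/flattenP => [s sL ps]; rewrite /cls -has_find.
by apply/hasP; exists s.
Qed.

Lemma ltS_flatten_perm (T : eqType) (L : seq (seq T)) ks p q :
  uniq (flatten L) -> p \in flatten L -> q \in flatten L ->
  perm_eq ks (iota 0 (size L)) ->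
  ltS (flatten (map (nth [::] L) ks)) p q = ltP ks (cls L p) (cls L q) (inner L p q).
Proof.
move=> uL pL qL pk.
have memk c : c < size L -> c \in ks by move=> h; rewrite (perm_mem pk) mem_iota.
have clsm r : r \in flatten L -> cls (map (nth [::] L) ks) r = index (cls L r) ks.
  move=> rL; rewrite /cls find_map /index; apply: eq_find => k /=.
  case: eqP => [->|ne]; first exact: mem_cls.
  by apply/negP => /(find_flatten_uniq uL) e; apply: ne.
rewrite ltS_flatten /inner !clsm //.
have cpk := memk _ (cls_lt pL); have cqk := memk _ (cls_lt qL).
rewrite (nth_map 0) ?index_mem // nth_index //.
rewrite /ltL /ltP; case: eqP => [/(@index_inj _ 0 _ _ _ cpk cqk) ->|ne]; first by rewrite eqxx.
by case: eqP => // e; case: ne; rewrite e.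
Qed.

Definition flip (ks : seq nat) i j := (i != j) && ((i < j) != (index i ks < index j ks)).
Definition flip4 ks i i' j j' :=
  flip ks i j (+) flip ks i j' (+) flip ks i' j (+) flip ks i' j'.

Lemma ltP_ltL ks i j b : ltP ks i j b = ltL i j b (+) flip ks i j.
Proof.
rewrite /ltP /ltL /flip; case: eqP => _ /=; first by rewrite addbF.
by case: (i < j); case: (index i ks < index j ks).
Qed.

Lemma X4P ks i i' j j' b1 b2 b3 b4 :
  X4 (ltP ks) i i' j j' b1 b2 b3 b4 = X4 ltL i i' j j' b1 b2 b3 b4 (+) flip4 ks i i' j j'.
Proof.
rewrite /X4 /flip4 !ltP_ltL.
by case: (ltL i j b1); case: (ltL i j' b2); case: (ltL i' j b3); case: (ltL i' j' b4);
  case: (flip ks i j); case: (flip ks i j'); case: (flip ks i' j); case: (flip ks i' j').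
Qed.

Lemma xcr_flatten (T : eqType) (L : seq (seq T)) u u' v v' :
  xcr (flatten L) u u' v v' = X4 ltL (cls L u) (cls L u') (cls L v) (cls L v')
    (inner L u v) (inner L u v') (inner L u' v) (inner L u' v').
Proof. by rewrite /xcr !ltS_flatten. Qed.

Lemma xcr_flatten_perm (T : eqType) (L : seq (seq T)) ks u u' v v' :
  uniq (flatten L) -> u \in flatten L -> u' \in flatten L -> v \in flatten L ->
  v' \in flatten L -> perm_eq ks (iota 0 (size L)) ->
  xcr (flatten (map (nth [::] L) ks)) u u' v v' =
  xcr (flatten L) u u' v v' (+) flip4 ks (cls L u) (cls L u') (cls L v) (cls L v').
Proof.
move=> uL hu hu' hv hv' pk.
by rewrite [xcr (flatten L) _ _ _ _]xcr_flatten -X4P /X4 /xcr !ltS_flatten_perm.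
Qed.

Lemma xcr_rot (T : eqType) (s : seq T) i u u' v v' :
  uniq s -> u \in s -> u' \in s -> v \in s -> v' \in s ->
  xcr (rot i s) u u' v v' = xcr s u u' v v'.
Proof.
move=> us hu hu' hv hv'.
pose L := [:: take i s; drop i s].
have fL : flatten L = s by rewrite /= cats0 cat_take_drop.
have fR : flatten (map (nth [::] L) [:: 1; 0]) = rot i s by rewrite /= cats0.
rewrite -fR; rewrite -fL in us hu hu' hv hv' *.
rewrite xcr_flatten_perm //.
have c2 r : r \in flatten L -> cls L r < 2 by move/cls_lt.
move: (c2 _ hu) (c2 _ hu') (c2 _ hv) (c2 _ hv').
move: (cls L u) (cls L u') (cls L v) (cls L v') => [|[|//]] [|[|//]] [|[|//]] [|[|//]] _ _ _ _;
  by rewrite addbF.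
Qed.

Lemma ltS_neg (T : eqType) (s : seq T) p q :
  p \in s -> q \in s -> p != q -> ltS s q p = ~~ ltS s p q.
Proof.
move=> ps qs npq; rewrite /ltS ltnNge leq_eqVlt negb_or.
have -> : (index p s != index q s).
  by apply/eqP => e; case/eqP: npq; apply: (@index_inj _ p s).
by [].
Qed.

Lemma xcr_swap1 (T : eqType) (s : seq T) u u' v v' : xcr s u u' v v' = xcr s u' u v v'.
Proof.
rewrite /xcr; by case: (ltS s u v); case: (ltS s u v'); case: (ltS s u' v); case: (ltS s u' v').
Qed.

Lemma xcr_swap2 (T : eqType) (s : seq T) u u' v v' : xcr s u u' v v' = xcr s u u' v' v.
Proof.
rewrite /xcr; by case: (ltS s u v); case: (ltS s u v'); case: (ltS s u' v); case: (ltS s u' v').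
Qed.

Lemma xcr_sym (T : eqType) (s : seq T) u u' v v' :
  u \in s -> u' \in s -> v \in s -> v' \in s ->
  u != v -> u != v' -> u' != v -> u' != v' ->
  xcr s v v' u u' = xcr s u u' v v'.
Proof.
move=> hu hu' hv hv' n1 n2 n3 n4.
rewrite /xcr (@ltS_neg _ s u v) // (@ltS_neg _ s u' v) // (@ltS_neg _ s u v') //
  (@ltS_neg _ s u' v') //.
by case: (ltS s u v); case: (ltS s u v'); case: (ltS s u' v); case: (ltS s u' v').
Qed.

Section Map.
Variables (B : finType) (sigma alpha : {perm B}).
Hypothesis aK : forall b, alpha (alpha b) = b.
Hypothesis afp : forall b, alpha b != b.

Lemma edge_ofA u : edge_of alpha (alpha u) = edge_of alpha u.
Proof. by rewrite /edge_of aK setUC. Qed.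

Lemma mem_edge p u : (p \in edge_of alpha u) = (p == u) || (p == alpha u).
Proof. by rewrite !inE. Qed.

Lemma edge_eq p u : edge_of alpha p = edge_of alpha u -> (p == u) || (p == alpha u).
Proof. by move=> e; rewrite -mem_edge -e mem_edge eqxx. Qed.

Lemma edge_neq u v : edge_of alpha u != edge_of alpha v ->
  [/\ u != v, u != alpha v, alpha u != v & alpha u != alpha v].
Proof.
move=> ne; split; apply/eqP => e; move/eqP: ne; apply.
- by rewrite e.
- by rewrite e edge_ofA.
- by rewrite -e edge_ofA.
- by rewrite -(aK u) e aK.
Qed.

Lemma afp' u : u != alpha u. Proof. by rewrite eq_sym. Qed.

Section Tour.
Variable S : {set {set B}}.
Local Notation tau := (tour sigma alpha S).
Hypothesis conn : forall x y, fconnect tau x y.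

Lemma orb_all c p : p \in fingraph.orbit tau c.
Proof. by rewrite -fconnect_orbit. Qed.

Lemma orb_uniq c : uniq (fingraph.orbit tau c).
Proof. exact: orbit_uniq. Qed.

Lemma orb_cycle c : fcycle tau (fingraph.orbit tau c).
Proof. by rewrite -fconnect_f. Qed.

Lemma orb_head c : exists r, fingraph.orbit tau c = c :: r.
Proof. by rewrite /fingraph.orbit -orderSpred /=; eexists. Qed.

Lemma orb_rot c d : exists i, fingraph.orbit tau d = rot i (fingraph.orbit tau c).
Proof.
exists (index d (fingraph.orbit tau c)).
exact: (fingraph.orbitE (orb_cycle c) (orb_uniq c) (orb_all c d)).
Qed.

Lemma xcr_orb c d u u' v v' :
  xcr (fingraph.orbit tau d) u u' v v' = xcr (fingraph.orbit tau c) u u' v v'.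
Proof. by have [i ->] := orb_rot c d; rewrite xcr_rot ?orb_uniq ?orb_all. Qed.

Lemma circ_xcr c x y u v : x = edge_of alpha u -> y = edge_of alpha v ->
  circ sigma alpha S x y = (x != y) && xcr (fingraph.orbit tau c) u (alpha u) v (alpha v).
Proof.
move=> ex ey; rewrite /circ; case: eqP => //= /eqP nxy.
have key a0 b0 : edge_of alpha a0 = edge_of alpha u -> edge_of alpha b0 = edge_of alpha v ->
  ((findex tau a0 b0 < findex tau a0 (alpha a0)) != (findex tau a0 (alpha b0) < findex tau a0 (alpha a0)))
  = xcr (fingraph.orbit tau c) u (alpha u) v (alpha v).
  move=> ea eb.
  have nab : edge_of alpha a0 != edge_of alpha b0 by rewrite ea eb -ex -ey.
  have [n1 n2 n3 n4] := edge_neq nab.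
  rewrite /findex (xcr_orb a0 c).
  have [r hr] := orb_head a0.
  transitivity (xcr (fingraph.orbit tau a0) a0 (alpha a0) b0 (alpha b0)).
    rewrite /xcr.
    have l0 p : p != a0 -> ltS (fingraph.orbit tau a0) a0 p.
      by move=> np; rewrite /ltS hr /= eqxx eq_sym (negbTE np).
    rewrite !l0 ?(eq_sym b0) // ?(eq_sym (alpha b0)) //.
    rewrite (@ltS_neg _ _ b0 (alpha a0)) ?orb_all // ?(eq_sym b0) //.
    rewrite (@ltS_neg _ _ (alpha b0) (alpha a0)) ?orb_all // ?(eq_sym (alpha b0)) //.
    rewrite /ltS; set o := fingraph.orbit tau a0.
    by case: (index b0 o < index (alpha a0) o); case: (index (alpha b0) o < index (alpha a0) o).
  move/edge_eq: ea => /orP [] /eqP ->; move/edge_eq: eb => /orP [] /eqP -> //.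
  - by rewrite aK xcr_swap2.
  - by rewrite aK xcr_swap1.
  - by rewrite !aK xcr_swap1 xcr_swap2.
apply/existsP/idP.
- move=> [a0 /existsP [b0 /and3P [/eqP ea /eqP eb]]].
  by rewrite key // -?ea -?eb.
- move=> h; exists u; apply/existsP; exists v; rewrite ex ey !eqxx /=.
  by rewrite key.
Qed.

End Tour.
End Map.

Definition ks8 := [:: 0; 5; 6; 3; 4; 1; 2; 7].
Definition cr i i' j j' := (i < j) (+) (i < j') (+) (i' < j) (+) (i' < j').
Definition segs := [:: 1; 3; 5; 7].

Lemma segsP i : i \in segs -> [\/ i = 1, i = 3, i = 5 | i = 7].
Proof. by rewrite !inE => /or4P [] /eqP ->; [constructor 1|constructor 2|constructor 3|constructor 4]. Qed.

Lemma lcomp_irr (T : eqType) (G : rel T) v x : lcomp G v x x = G x x.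
Proof. by rewrite /lcomp eqxx. Qed.

Lemma pivot_abstract (T : eqType) (G G' : rel T) (P : pred T) (e f : T) (c1 c2 : T -> nat) :
 P e -> P f -> e != f ->
 c1 e = 0 -> c2 e = 4 -> c1 f = 2 -> c2 f = 6 ->
 (forall x, P x -> x != e -> x != f -> c1 x \in segs /\ c2 x \in segs) ->
 (forall x, G x x = false) -> (forall x, G' x x = false) ->
 (forall x y, P x -> P y -> G x y = G y x) ->
 (forall x y, P x -> P y -> x != y ->
    G' x y = G x y (+) flip4 ks8 (c1 x) (c2 x) (c1 y) (c2 y)) ->
 G e f ->
 (forall x, P x -> x != e -> x != f -> G e x = cr 0 4 (c1 x) (c2 x)) ->
 (forall x, P x -> x != e -> x != f -> G f x = cr 2 6 (c1 x) (c2 x)) ->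
 forall x y, P x -> P y -> G' x y = pivot G e f x y.
Proof.
move=> Pe Pf nef c1e c2e c1f c2f Hc Gii G'ii Gsym HG' Gef Gex Gfx x y Px Py.
have [<-|nxy] := eqVneq x y; first by rewrite G'ii /pivot !lcomp_irr Gii.
rewrite HG' //.
have Gfe : G f e by rewrite Gsym.
have nfe : f != e by rewrite eq_sym.
have Gee := Gii e; have Gff := Gii f.
rewrite /pivot /lcomp.
have [xe|nxe] := eqVneq x e; have [xf|nxf] := eqVneq x f;
  have [ye|nye] := eqVneq y e; have [yf|nyf] := eqVneq y f.
all: try (by subst; rewrite ?eqxx in nxy nef).
all: try subst x; try subst y.
all: rewrite ?c1e ?c2e ?c1f ?c2f.
- by rewrite ?Gef ?Gfe ?Gee ?Gff ?nef ?nfe.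
- have [hy1 hy2] := Hc y Py nye nyf.
  have ney : e != y by rewrite eq_sym.
  have nfy : f != y by rewrite eq_sym.
  rewrite ?(Gsym y e Py Pe) ?(Gsym y f Py Pf).
  rewrite ?(Gex y Py nye nyf) ?(Gfx y Py nye nyf) ?Gef ?Gfe ?Gee ?Gff ?nef ?nfe ?ney ?nfy ?nye ?nyf /=.
  by case/segsP: hy1 => ->; case/segsP: hy2 => ->.
- by rewrite ?Gef ?Gfe ?Gee ?Gff ?nef ?nfe.
- have [hy1 hy2] := Hc y Py nye nyf.
  have ney : e != y by rewrite eq_sym.
  have nfy : f != y by rewrite eq_sym.
  rewrite ?(Gsym y e Py Pe) ?(Gsym y f Py Pf).
  rewrite ?(Gex y Py nye nyf) ?(Gfx y Py nye nyf) ?Gef ?Gfe ?Gee ?Gff ?nef ?nfe ?ney ?nfy ?nye ?nyf /=.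
  by case/segsP: hy1 => ->; case/segsP: hy2 => ->.
- have [hx1 hx2] := Hc x Px nxe nxf.
  have nex : e != x by rewrite eq_sym.
  have nfx : f != x by rewrite eq_sym.
  rewrite ?(Gsym x e Px Pe) ?(Gsym x f Px Pf).
  rewrite ?(Gex x Px nxe nxf) ?(Gfx x Px nxe nxf) ?Gef ?Gfe ?Gee ?Gff ?nef ?nfe ?nex ?nfx ?nxe ?nxf /=.
  by case/segsP: hx1 => ->; case/segsP: hx2 => ->.
- have [hx1 hx2] := Hc x Px nxe nxf.
  have nex : e != x by rewrite eq_sym.
  have nfx : f != x by rewrite eq_sym.
  rewrite ?(Gsym x e Px Pe) ?(Gsym x f Px Pf).
  rewrite ?(Gex x Px nxe nxf) ?(Gfx x Px nxe nxf) ?Gef ?Gfe ?Gee ?Gff ?nef ?nfe ?nex ?nfx ?nxe ?nxf /=.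
  by case/segsP: hx1 => ->; case/segsP: hx2 => ->.
- have [hx1 hx2] := Hc x Px nxe nxf; have [hy1 hy2] := Hc y Py nye nyf.
  have nex : e != x by rewrite eq_sym.
  have nfx : f != x by rewrite eq_sym.
  have ney : e != y by rewrite eq_sym.
  have nfy : f != y by rewrite eq_sym.
  rewrite ?(Gsym x e Px Pe) ?(Gsym x f Px Pf) ?(Gsym y e Py Pe) ?(Gsym y f Py Pf) ?(Gsym y x Py Px).
  rewrite ?(Gex x Px nxe nxf) ?(Gfx x Px nxe nxf) ?(Gex y Py nye nyf) ?(Gfx y Py nye nyf) ?Gef ?Gfe ?Gee ?Gff ?nef ?nfe ?nex ?nfx ?ney ?nfy ?nxy ?nxe ?nxf ?nye ?nyf /=.
  move: (G x y) => g.
  (case/segsP: hx1 => ->; case/segsP: hx2 => ->; case/segsP: hy1 => ->; case/segsP: hy2 => ->; by case: g).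
Qed.

Lemma path_split (T : Type) (r : rel T) x M1 y M2 z :
  path r x (rcons (M1 ++ y :: M2) z) = path r x (rcons M1 y) && path r y (rcons M2 z).
Proof. by rewrite rcons_cat cat_path /= !rcons_path !andbA. Qed.

Lemma cycle4 (T : Type) (r : rel T) a X b Y c Z d W :
  path.cycle r (a :: X ++ b :: Y ++ c :: Z ++ d :: W) =
  [&& path r a (rcons X b), path r b (rcons Y c), path r c (rcons Z d) & path r d (rcons W a)].
Proof. by rewrite /path.cycle !path_split. Qed.

Lemma cycle2 (T : Type) (r : rel T) a X b W :
  path.cycle r (a :: X ++ b :: W) = path r a (rcons X b) && path r b (rcons W a).
Proof. by rewrite /path.cycle !path_split. Qed.

Lemma path_tr (T : eqType) (g g' : T -> T) p p' M q :
  path (frel g) p (rcons M q) -> g' p' = g p -> (forall m, m \in M -> g' m = g m) ->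
  path (frel g') p' (rcons M q).
Proof.
elim: M p p' => [|m M IH] p p' /=.
  by move=> h e _; rewrite e.
move=> /andP [h1 h2] e hM; rewrite e h1 /=.
apply: IH h2 _ _; first by apply: hM; rewrite mem_head.
by move=> z hz; apply: hM; rewrite in_cons hz orbT.
Qed.

Lemma index_cat_lt (T : eqType) (s1 s2 : seq T) z : (index z (s1 ++ s2) < size s1) = (z \in s1).
Proof.
rewrite index_cat; case: ifP => h; first by rewrite index_mem h.
by rewrite ltnNge leq_addr.
Qed.

Lemma index_cat_in (T : eqType) (s1 s2 : seq T) z : z \in s1 -> index z (s1 ++ s2) = index z s1.
Proof. by rewrite index_cat => ->. Qed.

Lemma split_lt (T : eqType) (s : seq T) x y : uniq s -> y \in s -> index x s < index y s ->
  exists s1 s2, [/\ s = s1 ++ y :: s2, x \in s1 & index x s = index x s1].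
Proof.
move=> us ys; case/splitPr: ys us => s1 s2 us.
have ny : y \notin s1.
  move: us; rewrite cat_uniq => /and3P [_ h _]; apply/negP => ys1.
  by move/hasP: h; apply; exists y; rewrite ?mem_head.
have iy : index y (s1 ++ y :: s2) = size s1 by rewrite index_cat (negbTE ny) /= eqxx addn0.
rewrite iy index_cat_lt => xs; exists s1, s2; split => //.
exact: index_cat_in.
Qed.

Lemma split3 (T : eqType) (s : seq T) p q t : uniq s -> t \in s ->
  index p s < index q s -> index q s < index t s ->
  exists X Y Z W, s = X ++ p :: Y ++ q :: Z ++ t :: W.
Proof.
move=> us ts hpq hqt.
have [s1 [W [es qs iq]]] := split_lt us ts hqt.
have us1 : uniq s1 by move: us; rewrite es cat_uniq => /andP [].
have ps : p \in s1.
  rewrite es in hpq iq; rewrite -(index_cat_lt s1 (t :: W)).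
  by apply: (ltn_trans hpq); rewrite iq index_mem.
have ip : index p s = index p s1 by rewrite es index_cat_in.
rewrite ip iq in hpq.
have [s3 [Z [es1 ps3 _]]] := split_lt us1 qs hpq.
case/splitPr: ps3 es1 => X Y es1.
by exists X, Y, Z, W; rewrite es es1 -!catA.
Qed.

Lemma fconn_closed (T : finType) (g : T -> T) p x y :
  fcycle g p -> x \in p -> fconnect g x y -> y \in p.
Proof.
move=> cp xp /iter_findex <-; elim: (findex g x y) => [|n IH] //=.
exact: (mem_fcycle cp).
Qed.

Lemma X4_cr i i' j j' b1 b2 b3 b4 : i != j -> i != j' -> i' != j -> i' != j' ->
  X4 ltL i i' j j' b1 b2 b3 b4 = cr i i' j j'.
Proof. by move=> h1 h2 h3 h4; rewrite /X4 /ltL /cr (negbTE h1) (negbTE h2) (negbTE h3) (negbTE h4). Qed.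

Section Main.
Variables (B : finType) (sigma alpha : {perm B}).
Hypothesis aK : forall b, alpha (alpha b) = b.

Lemma tour_sd S e f p :
  tour sigma alpha (symdiff S [set e; f]) p =
  if edge_of alpha p \in [set e; f] then tour sigma alpha S (alpha p) else tour sigma alpha S p.
Proof.
rewrite /tour /symdiff (edge_ofA aK) aK in_setU !in_setD.
by case: (edge_of alpha p \in [set e; f]); case: (edge_of alpha p \in S).
Qed.

Lemma tour_sd_nsp S a b p : p \notin edge_of alpha a -> p \notin edge_of alpha b ->
  tour sigma alpha (symdiff S [set edge_of alpha a; edge_of alpha b]) p = tour sigma alpha S p.
Proof.
move=> ha hb; rewrite tour_sd; case: ifP => //; rewrite !inE => /orP [] /eqP h.
- by case/negP: ha; rewrite -h !inE eqxx.
- by case/negP: hb; rewrite -h !inE eqxx.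
Qed.

Lemma tour_sd_a S a b :
  tour sigma alpha (symdiff S [set edge_of alpha a; edge_of alpha b]) a = tour sigma alpha S (alpha a)
  /\ tour sigma alpha (symdiff S [set edge_of alpha a; edge_of alpha b]) (alpha a) = tour sigma alpha S a.
Proof. by rewrite !tour_sd (edge_ofA aK) aK !inE eqxx. Qed.

Lemma tour_sd_b S a b :
  tour sigma alpha (symdiff S [set edge_of alpha a; edge_of alpha b]) b = tour sigma alpha S (alpha b)
  /\ tour sigma alpha (symdiff S [set edge_of alpha a; edge_of alpha b]) (alpha b) = tour sigma alpha S b.
Proof. by rewrite !tour_sd (edge_ofA aK) aK !inE eqxx orbT. Qed.

Lemma cls_seg a b X Y Z W p :
  let L := [:: [:: a]; X; [:: b]; Y; [:: alpha a]; Z; [:: alpha b]; W] in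
  p \in flatten L -> edge_of alpha p != edge_of alpha a -> edge_of alpha p != edge_of alpha b ->
  cls L p \in segs.
Proof.
move=> L hp na nb; move: (cls L p) (cls_lt hp) (mem_cls hp) => k.
case: k => [|[|[|[|[|[|[|[|k]]]]]]]] //= _; rewrite ?inE => /eqP ep.
- by rewrite ep eqxx in na.
- by rewrite ep eqxx in nb.
- by rewrite ep (edge_ofA aK) eqxx in na.
- by rewrite ep (edge_ofA aK) eqxx in nb.
Qed.

End Main.

Lemma add8 (d1 c1 d2 c2 d3 c3 d4 c4 : nat) :
  d1 + (c1 + (d2 + (c2 + (d3 + (c3 + (d4 + c4)))))) =
  d1 + (c3 + (d4 + (c2 + (d3 + (c1 + (d2 + c4)))))).
Proof. lia. Qed.

Theorem lemma8 (B : finType) (sigma alpha : {perm B}) (S : {set {set B}})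
  (e f : {set B}) :
  is_map sigma alpha ->
  quasi_tree sigma alpha S ->
  e \in edges alpha -> f \in edges alpha -> e != f ->
  (circ sigma alpha S e f ->
     quasi_tree sigma alpha (symdiff S [set e; f]) /\
     (forall x y, x \in edges alpha -> y \in edges alpha ->
        circ sigma alpha (symdiff S [set e; f]) x y = pivot (circ sigma alpha S) e f x y) /\
     (forall x, x \in edges alpha ->
        color (symdiff S [set e; f]) x =
          (if x \in [set e; f] then swap_color (color S x) else color S x)))
  /\
  (quasi_tree sigma alpha (symdiff S [set e; f]) -> circ sigma alpha S e f).
Proof.
move=> [aK [afp _]] [Ssub conn] eE fE nef.
have S'sub : symdiff S [set e; f] \subset edges alpha.
  apply/subsetP => x; rewrite /symdiff in_setU !in_setD => /orP [] /andP [h1 h2].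
  - exact: (subsetP Ssub).
  - by move: h2; rewrite !inE => /orP [] /eqP ->.
have col : forall x, x \in edges alpha -> color (symdiff S [set e; f]) x =
    (if x \in [set e; f] then swap_color (color S x) else color S x).
  move=> x _; rewrite /color /symdiff in_setU !in_setD.
  by case: (x \in [set e; f]); case: (x \in S).
case/imsetP: eE => a _ ea; case/imsetP: fE => b0 _ eb0.
set tau := tour sigma alpha S.
set w := fingraph.orbit tau a.
have [r hw] := orb_head sigma alpha S a.
have uw : uniq w by exact: orb_uniq.
have allw : forall p, p \in w := orb_all conn a.
wlog hb : b0 eb0 / ltS w b0 (alpha b0).
  move=> H; case hb: (ltS w b0 (alpha b0)); first exact: H hb.
  apply: (H (alpha b0)); first by rewrite (edge_ofA aK).
  by rewrite aK (@ltS_neg _ w b0 (alpha b0)) ?hb // eq_sym.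
rename b0 into b.
subst e f.
have [n1 n2 n3 n4] := edge_neq aK nef.
have naa : a != alpha a by rewrite eq_sym afp.
have nbb : b != alpha b by rewrite eq_sym afp.
have ur : uniq r by move: uw; rewrite /w hw => /andP [].
have inr p : p != a -> p \in r.
  by move=> hp; move: (allw p); rewrite /w hw inE (negbTE hp).
have ltr p q : p != a -> q != a -> ltS w p q = ltS r p q.
  by move=> hp hq; rewrite /ltS /w hw /= eq_sym (negbTE hp) eq_sym (negbTE hq) ltnS.
have ra' : alpha a \in r by apply: inr; rewrite eq_sym.
have rb : b \in r by apply: inr; rewrite eq_sym.
have rb' : alpha b \in r by apply: inr; rewrite eq_sym.
rewrite ltr ?(eq_sym b) ?(eq_sym (alpha b)) // in hb.
have ineq p q : p \in r -> q \in r -> p != q -> index p r != index q r.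
  by move=> hp hq; apply: contra => /eqP /(@index_inj _ p r _ _ hp hq) ->.
set tau' := tour sigma alpha (symdiff S [set edge_of alpha a; edge_of alpha b]).
have cyc : fcycle tau w by exact: orb_cycle.
have [ta ta'] := @tour_sd_a _ sigma alpha aK S a b.
have [tb tb'] := @tour_sd_b _ sigma alpha aK S a b.
case: (ltngtP (index (alpha a) r) (index b r)) => [hA|hBC|hE].
-
  have [X [Y [Z [W hr']]]] := split3 ur rb' hA hb.
  set L := [:: [:: a]; X; [:: alpha a]; Y; [:: b]; Z; [:: alpha b]; W].
  have hw2 : w = a :: X ++ alpha a :: Y ++ b :: Z ++ alpha b :: W by rewrite /w hw hr'.
  have hwL : w = flatten L by rewrite hw2 /= cats0.
  have uL : uniq (flatten L) by rewrite -hwL.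
  have ca : cls L a = 0 by apply: (find_flatten_uniq uL); rewrite /= inE.
  have ca' : cls L (alpha a) = 2 by apply: (find_flatten_uniq uL); rewrite /= inE.
  have cb : cls L b = 4 by apply: (find_flatten_uniq uL); rewrite /= inE.
  have cb' : cls L (alpha b) = 6 by apply: (find_flatten_uniq uL); rewrite /= inE.
  have nsp k m : m \in nth [::] L k -> k \in segs ->
      (m \notin edge_of alpha a) && (m \notin edge_of alpha b).
    move=> hm hk; have cm := find_flatten_uniq uL hm.
    apply/andP; split; apply/negP; rewrite !inE => /orP [] /eqP em; move: hk;
      by rewrite -cm em ?ca ?ca' ?cb ?cb'.
  have notin k m : m \in nth [::] L k -> cls L m != k -> False.
    by move=> hm; rewrite (find_flatten_uniq uL hm) eqxx.
  have cef : circ sigma alpha S (edge_of alpha a) (edge_of alpha b) = false.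
    by rewrite (circ_xcr aK conn a (erefl _) (erefl _)) -/tau -/w hwL xcr_flatten ca ca' cb cb' nef.
  rewrite cef; split => // [[_ conn']].
  move: cyc; rewrite hw2 cycle4 => /and4P [pX pY pZ pW].
  have cyc' : fcycle tau' (a :: Y ++ b :: W).
    rewrite cycle2; apply/andP; split.
    - apply: (path_tr pY ta) => m hm.
      by have /andP [h1 h2] := nsp 3 m hm isT; apply: tour_sd_nsp.
    - apply: (path_tr pW tb) => m hm.
      by have /andP [h1 h2] := nsp 7 m hm isT; apply: tour_sd_nsp.
  have := fconn_closed cyc' (mem_head _ _) (conn' a (alpha a)).
  rewrite !(inE, mem_cat) => /or4P [].
  + by rewrite eq_sym (negbTE naa).
  + by move=> h; exfalso; apply: (notin 3 _ h); rewrite ca'.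
  + by rewrite (negbTE n3).
  + by move=> h; exfalso; apply: (notin 7 _ h); rewrite ca'.
- case: (ltngtP (index (alpha a) r) (index (alpha b) r)) => [hB|hC|hE2].
  +
    have [X [Y [Z [W hr']]]] := split3 ur rb' hBC hB.
    set L := [:: [:: a]; X; [:: b]; Y; [:: alpha a]; Z; [:: alpha b]; W].
    have hw2 : w = a :: X ++ b :: Y ++ alpha a :: Z ++ alpha b :: W by rewrite /w hw hr'.
    have hwL : w = flatten L by rewrite hw2 /= cats0.
    have uL : uniq (flatten L) by rewrite -hwL.
    have allL p : p \in flatten L by rewrite -hwL.
    have ca : cls L a = 0 by apply: (find_flatten_uniq uL); rewrite /= inE.
    have ca' : cls L (alpha a) = 4 by apply: (find_flatten_uniq uL); rewrite /= inE.
    have cb : cls L b = 2 by apply: (find_flatten_uniq uL); rewrite /= inE.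
    have cb' : cls L (alpha b) = 6 by apply: (find_flatten_uniq uL); rewrite /= inE.
    have nsp k m : m \in nth [::] L k -> k \in segs ->
        (m \notin edge_of alpha a) && (m \notin edge_of alpha b).
      move=> hm hk; have cm := find_flatten_uniq uL hm.
      apply/andP; split; apply/negP; rewrite !inE => /orP [] /eqP em; move: hk;
        by rewrite -cm em ?ca ?ca' ?cb ?cb'.
    have cef : circ sigma alpha S (edge_of alpha a) (edge_of alpha b) = true.
      by rewrite (circ_xcr aK conn a (erefl _) (erefl _)) -/tau -/w hwL xcr_flatten ca ca' cb cb' nef.
    rewrite cef; split => // _.
    move: cyc; rewrite hw2 cycle4 => /and4P [pX pY pZ pW].
    set w' := flatten (map (nth [::] L) ks8).
    have hw' : w' = a :: Z ++ alpha b :: Y ++ alpha a :: X ++ b :: W by rewrite /w' /= cats0.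
    have cyc' : fcycle tau' w'.
      rewrite hw' cycle4; apply/and4P; split.
      - apply: (path_tr pZ ta) => m hm.
        by have /andP [h1 h2] := nsp 5 m hm isT; apply: tour_sd_nsp.
      - apply: (path_tr pY tb') => m hm.
        by have /andP [h1 h2] := nsp 3 m hm isT; apply: tour_sd_nsp.
      - apply: (path_tr pX ta') => m hm.
        by have /andP [h1 h2] := nsp 1 m hm isT; apply: tour_sd_nsp.
      - apply: (path_tr pW tb) => m hm.
        by have /andP [h1 h2] := nsp 7 m hm isT; apply: tour_sd_nsp.
    have pw : perm_eq w w'.
      rewrite hw2 hw'; apply/seq.permP => P; rewrite /= !count_cat /= !count_cat /= !count_cat /=.
      exact: add8.
    have uw' : uniq w' by rewrite -(perm_uniq pw).
    have allw' p : p \in w' by rewrite -(perm_mem pw).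
    have conn' : forall x y, fconnect tau' x y.
      by move=> x y; rewrite (fconnect_cycle cyc' (allw' x)) allw'.
    have horb' : fingraph.orbit tau' a = w'.
      by rewrite (fingraph.orbitE cyc' uw' (allw' a)) hw' /= eqxx rot0.
    split; first by split.
    split; last exact: col.
    pose rep x := if x == edge_of alpha a then a else if x == edge_of alpha b then b
                  else odflt a [pick u | edge_of alpha u == x].
    have erep x : x \in edges alpha -> x = edge_of alpha (rep x).
      move=> hx; rewrite /rep; case: eqP => [->//|_]; case: eqP => [->//|_].
      case: pickP => [u /eqP -> //| none].
      by case/imsetP: hx => u _ eu; move: (none u); rewrite eu eqxx.
    have Pe : edge_of alpha a \in edges alpha by apply/imsetP; exists a.
    have Pf : edge_of alpha b \in edges alpha by apply/imsetP; exists b.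
    have repe : rep (edge_of alpha a) = a by rewrite /rep eqxx.
    have repf : rep (edge_of alpha b) = b by rewrite /rep eq_sym (negbTE nef) eqxx.
    have hseg x : x \in edges alpha -> x != edge_of alpha a -> x != edge_of alpha b ->
        cls L (rep x) \in segs /\ cls L (alpha (rep x)) \in segs.
      move=> hx nxe nxf; rewrite (erep x hx) in nxe nxf; split.
      - exact: (cls_seg aK (allL _) nxe nxf).
      - by apply: (cls_seg aK (allL _)); rewrite (edge_ofA aK).
    have segne i j : i \in segs -> j \in [:: 0; 2; 4; 6] -> j != i.
      by case/segsP => ->; rewrite !inE => /or4P [] /eqP ->.
    have hwo : fingraph.orbit (tour sigma alpha S) a = flatten L by rewrite -hwL.
    apply: (pivot_abstract (P := fun x => x \in edges alpha)
              (c1 := fun x => cls L (rep x)) (c2 := fun x => cls L (alpha (rep x)))) => //.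
    - by rewrite repe.
    - by rewrite repe.
    - by rewrite repf.
    - by rewrite repf.
    - by move=> x; rewrite /circ eqxx.
    - by move=> x; rewrite /circ eqxx.
    - move=> x y hx hy.
      rewrite (circ_xcr aK conn a (erep x hx) (erep y hy)) (circ_xcr aK conn a (erep y hy) (erep x hx)).
      have [exy|nxy] := eqVneq x y; first by rewrite exy.
      have := nxy; rewrite {1}(erep x hx) {1}(erep y hy) => /(edge_neq aK) [m1 m2 m3 m4].
      rewrite xcr_sym ?allw //; by rewrite eq_sym.
    - move=> x y hx hy nxy.
      rewrite (circ_xcr aK conn' a (erep x hx) (erep y hy)) (circ_xcr aK conn a (erep x hx) (erep y hy)).
      rewrite nxy /= horb' hwo /w' xcr_flatten_perm //.
    - move=> x hx nxe nxf; have [h1 h2] := hseg x hx nxe nxf.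
      rewrite (circ_xcr aK conn a (erefl _) (erep x hx)) (eq_sym (edge_of alpha a) x) nxe /= hwo xcr_flatten ca ca'.
      by rewrite X4_cr // ?(segne _ _ h1) ?(segne _ _ h2).
    - move=> x hx nxe nxf; have [h1 h2] := hseg x hx nxe nxf.
      rewrite (circ_xcr aK conn b (erefl _) (erep x hx)) (eq_sym (edge_of alpha b) x) nxf /= (xcr_orb conn a) hwo xcr_flatten cb cb'.
      by rewrite X4_cr // ?(segne _ _ h1) ?(segne _ _ h2).
  +
    have [X [Y [Z [W hr']]]] := split3 ur ra' hb hC.
    set L := [:: [:: a]; X; [:: b]; Y; [:: alpha b]; Z; [:: alpha a]; W].
    have hw2 : w = a :: X ++ b :: Y ++ alpha b :: Z ++ alpha a :: W by rewrite /w hw hr'.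
    have hwL : w = flatten L by rewrite hw2 /= cats0.
    have uL : uniq (flatten L) by rewrite -hwL.
    have ca : cls L a = 0 by apply: (find_flatten_uniq uL); rewrite /= inE.
    have ca' : cls L (alpha a) = 6 by apply: (find_flatten_uniq uL); rewrite /= inE.
    have cb : cls L b = 2 by apply: (find_flatten_uniq uL); rewrite /= inE.
    have cb' : cls L (alpha b) = 4 by apply: (find_flatten_uniq uL); rewrite /= inE.
    have nsp k m : m \in nth [::] L k -> k \in segs ->
        (m \notin edge_of alpha a) && (m \notin edge_of alpha b).
      move=> hm hk; have cm := find_flatten_uniq uL hm.
      apply/andP; split; apply/negP; rewrite !inE => /orP [] /eqP em; move: hk;
        by rewrite -cm em ?ca ?ca' ?cb ?cb'.
    have notin k m : m \in nth [::] L k -> cls L m != k -> False.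
      by move=> hm; rewrite (find_flatten_uniq uL hm) eqxx.
    have cef : circ sigma alpha S (edge_of alpha a) (edge_of alpha b) = false.
      by rewrite (circ_xcr aK conn a (erefl _) (erefl _)) -/tau -/w hwL xcr_flatten ca ca' cb cb' nef.
    rewrite cef; split => // [[_ conn']].
    move: cyc; rewrite hw2 cycle4 => /and4P [pX pY pZ pW].
    have cyc' : path (frel tau') a (rcons W a).
      apply: (path_tr pW ta) => m hm.
      by have /andP [h1 h2] := nsp 7 m hm isT; apply: tour_sd_nsp.
    have cyc'' : fcycle tau' (a :: W) := cyc'.
    have := fconn_closed cyc'' (mem_head _ _) (conn' a (alpha a)).
    rewrite inE => /orP [].
    * by rewrite eq_sym (negbTE naa).
    * by move=> h; exfalso; apply: (notin 7 _ h); rewrite ca'.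
  + by have := ineq _ _ ra' rb' n4; rewrite hE2 eqxx.
- by have := ineq _ _ ra' rb n3; rewrite hE eqxx.
Qed.
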